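(* Let $\mathcal{A}$ be a finite set of at least 3 alternatives, $N\ge2$, $i\in\{1,\dots,N\}$, and $w:\underline{\mathcal{P}}^N\to\underline{\mathcal{P}}$ satisfy Unanimity, IIA and Non-Dictatorship. Then the self-reference system $(w,\Omega_i)$ with valid elements $\mathcal{P}^N$ is quasi-Gödelian with respect to $\Upsilon_i=(\mathbf{c},\dots,\mathbf{i},\dots,\mathbf{c})$: there exists $q\in\mathcal{P}^N$ with $q\le\neg(\Upsilon_i\ast q)$ such that $(\Upsilon_i,q)$ does not satisfy both quasi-consistency $q\le\neg(\Upsilon_i\ast\neg q)$ and quasi-completeness ($\neg(\Upsilon_i\ast q)$ and $\neg(\Upsilon_i\ast\neg q)$ are inconsistent).
   Context: $\mathcal{P}$: weak orders on $\mathcal{A}$; $\underline{\mathcal{P}}=\mathcal{P}\cup\{\mathbf{c}\}$, $\mathbf{c}$ a new element (contradictory preference cycle). Strictness order: $r\le s$ iff every strict preference of $s$ is one of $r$; $\mathbf{c}$ bottom, $\mathbf{i}$ (total indifference) top; $\wedge,\vee$ meet and join; negation $\neg\mathbf{c}=\mathbf{i}$, $\neg\mathbf{i}=\mathbf{c}$, and otherwise $\neg r$ reverses all strict preferences of $r$. On $\underline{\mathcal{P}}^N$ all operations and the order are coordinatewise; $\mathcal{P}^N$ are the valid profiles, and $p,q$ are inconsistent if $p_j\wedge q_j=\mathbf{c}$ for some $j$. $\Omega_i((p_1,\dots,p_N),r)=(\mathbf{c},\dots,p_i\wedge r,\dots,\mathbf{c})$ (position $i$), and $e\ast f:=\Omega_i(e,w(f))$;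 $\neg\Upsilon\ast d$ means $\neg(\Upsilon\ast d)$. Unanimity: if all individuals of $p\in\mathcal{P}^N$ strictly prefer $a$ to $b$, so does $w(p)$. IIA: the aggregate comparison of $a,b$ depends only on individuals' comparisons of $a,b$ (for these axioms $\mathbf{c}$ is read as a preference cycle, i.e. an intransitive assignment of pairwise comparisons). Dictator at $j$: for all $p\in\mathcal{P}^N$, $w(p)=\mathbf{c}\Rightarrow p_j=\mathbf{i}$ and $p_j\ne\mathbf{i}\Rightarrow w(p)\le p_j$. Non-Dictatorship: no dictator. *)

(* Defs.v *)
From mathcomp Require Import all_boot.
Set Implicit Arguments. Unset Strict Implicit. Unset Printing Implicit Defensive.

Section Prefs.
Variable A : finType.

(* A binary relation on A, stored as a finite function: R (a,b) = "a is at
   least as good as b". *)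
Definition wrel := {ffun A * A -> bool}.

Definition wcomplete (R : A -> A -> bool) : bool :=
  [forall a, forall b, R a b || R b a].
Definition wtransitive (R : A -> A -> bool) : bool :=
  [forall a, forall b, forall c, R a b ==> R b c ==> R a c].

Definition is_weak_order (R : wrel) : bool :=
  wcomplete (fun a b => R (a, b)) && wtransitive (fun a b => R (a, b)).

Definition worder := {R : wrel | is_weak_order R}.

(* underline P = P + {c}; None is the contradictory element c *)
Definition pref := option worder.
Definition pc : pref := None.

Definition wstrict (r : worder) (a b : A) : bool :=
  val r (a, b) && ~~ val r (b, a).

Lemma tot_wo : is_weak_order [ffun _ => true].
Proof.
apply/andP; split.
  by apply/forallP=> a; apply/forallP=> b; rewrite !ffunE.
by apply/forallP=> a; apply/forallP=> b; apply/forallP=> c; rewrite !ffunE.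
Qed.
Definition tot : worder := exist (fun R : wrel => is_weak_order R) _ tot_wo.
Definition pi : pref := Some tot.

Definition rev_rel (R : wrel) : wrel := [ffun x => R (x.2, x.1)].
Lemma rev_wo (r : worder) : is_weak_order (rev_rel (val r)).
Proof.
case: r => R /= /andP [/forallP Hc /forallP Ht]; apply/andP; split.
  apply/forallP=> a; apply/forallP=> b; rewrite !ffunE /=.
  by move/forallP: (Hc b) => /(_ a); rewrite orbC.
apply/forallP=> a; apply/forallP=> b; apply/forallP=> c; rewrite !ffunE /=.
apply/implyP=> Hba; apply/implyP=> Hcb.
by move/forallP: (Ht c) => /(_ b) /forallP /(_ a) /implyP /(_ Hcb) /implyP /(_ Hba).
Qed.
Definition wrev (r : worder) : worder := exist (fun R : wrel => is_weak_order R) _ (rev_wo r).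

Definition ple (r s : pref) : bool :=
  match r, s with
  | None, _ => true
  | Some _, None => false
  | Some r', Some s' => [forall a, forall b, wstrict s' a b ==> wstrict r' a b]
  end.

(* meet: the greatest lower bound w.r.t. ple (it always exists; the default
   c of the pick is never used) *)
Definition is_glb (x r s : pref) : bool :=
  [&& ple x r, ple x s & [forall y : pref, (ple y r && ple y s) ==> ple y x]].
Definition pmeet (r s : pref) : pref :=
  if [pick x | is_glb x r s] is Some x then x else pc.

Definition pneg (r : pref) : pref :=
  match r with
  | None => pi
  | Some r' => if r' == tot then pc else Some (wrev r')
  end.

(* the pairwise comparison relation of an element of underline P
   (used only for valid elements) *)
Definition pcmp (r : pref) (a b : A) : bool :=
  if r is Some r' then val r' (a, b) else false.
Definition pstrict (r : pref) (a b : A) : bool :=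
  if r is Some r' then wstrict r' a b else false.

Variable N : nat.

Definition profile := {ffun 'I_N -> pref}.

Definition valid (p : profile) : bool := [forall j, p j != pc].
Definition prof_le (p q : profile) : bool := [forall j, ple (p j) (q j)].
Definition prof_neg (p : profile) : profile := [ffun j => pneg (p j)].
Definition inconsistent (p q : profile) : Prop := exists j, pmeet (p j) (q j) = pc.

Definition Omega (i : 'I_N) (p : profile) (r : pref) : profile :=
  [ffun j => if j == i then pmeet (p i) r else pc].
Definition star (w : profile -> pref) (i : 'I_N) (e f : profile) : profile :=
  Omega i e (w f).
Definition Upsilon (i : 'I_N) : profile := [ffun j => if j == i then pi else pc].

(* The aggregate w(p), for valid p, read as an assignment of pairwise
   comparisons cmp p: complete; if w(p) is a weak order, cmp p is that weak
   order; if w(p) = c, cmp p is an intransitive assignment (a cycle). *)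
Definition reads_as (w : profile -> pref) (cmp : profile -> A -> A -> bool) : Prop :=
  forall p, valid p ->
    wcomplete (cmp p) /\
    match w p with
    | None => ~~ wtransitive (cmp p)
    | Some r => forall a b, cmp p a b = val r (a, b)
    end.

Definition cstrict (R : A -> A -> bool) (a b : A) : bool := R a b && ~~ R b a.

Definition Unanimity (cmp : profile -> A -> A -> bool) : Prop :=
  forall p, valid p -> forall a b,
    (forall j, pstrict (p j) a b) -> cstrict (cmp p) a b.

Definition IIA (cmp : profile -> A -> A -> bool) : Prop :=
  forall p q, valid p -> valid q -> forall a b,
    (forall j, pcmp (p j) a b = pcmp (q j) a b /\ pcmp (p j) b a = pcmp (q j) b a) ->
    cmp p a b = cmp q a b /\ cmp p b a = cmp q b a.

Definition Dictator (w : profile -> pref) (j : 'I_N) : Prop :=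
  forall p, valid p ->
    (w p = pc -> p j = pi) /\ (p j <> pi -> ple (w p) (p j)).

Definition NonDictatorship (w : profile -> pref) : Prop :=
  ~ exists j, Dictator w j.

End Prefs.

(* Main.v *)
Require Import Defs.
From mathcomp Require Import all_boot.
Set Implicit Arguments. Unset Strict Implicit. Unset Printing Implicit Defensive.

Section Basic.
Variable A : finType.

Lemma wo_total (r : worder A) a b : val r (a, b) || val r (b, a).
Proof. by case: r => R /= /andP [/forallP /(_ a) /forallP /(_ b) H _]. Qed.

Lemma wo_trans (r : worder A) a b c : val r (a, b) -> val r (b, c) -> val r (a, c).
Proof.
case: r => R /= /andP [_ /forallP /(_ a) /forallP /(_ b) /forallP /(_ c) H] h1 h2.
by move/implyP: H => /(_ h1) /implyP /(_ h2).
Qed.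

Lemma wo_eq (r s : worder A) :
  (forall a b, wstrict s a b = wstrict r a b) -> r = s.
Proof.
move=> H; apply: val_inj; apply/ffunP => [[a b]].
have E (t : worder A) : val t (a, b) = ~~ wstrict t b a.
  rewrite /wstrict; case E1: (val t (a, b)); first by rewrite andbF.
  by have := wo_total t a b; rewrite E1 /= => ->.
by rewrite !E H.
Qed.

Lemma ple_refl (x : pref A) : ple x x.
Proof. by case: x => [r|] //=; apply/forallP=> a; apply/forallP=> b; apply/implyP. Qed.

Lemma ple_pi (x : pref A) : ple x (Defs.pi A).
Proof. by case: x => [r|] //=; apply/forallP=> a; apply/forallP=> b; rewrite /wstrict /= !ffunE. Qed.

Lemma ple_anti (x y : pref A) : ple x y -> ple y x -> x = y.
Proof.
case: x => [r|]; case: y => [s|] //= /forallP H1 /forallP H2.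
congr Some; apply: wo_eq => a b.
move/forallP: (H1 a) => /(_ b) /implyP h1.
move/forallP: (H2 a) => /(_ b) /implyP h2.
by apply/idP/idP => [/h1|/h2].
Qed.

Lemma pmeet_pi (x : pref A) : pmeet (Defs.pi A) x = x.
Proof.
have G : is_glb x (Defs.pi A) x.
  rewrite /is_glb ple_pi ple_refl /=; apply/forallP => y; apply/implyP => /andP [_ ->] //.
rewrite /pmeet; case: pickP => [y Hy|H]; last by rewrite H in G.
move/and3P: Hy => [_ Hyx /forallP /(_ x)]; rewrite ple_pi ple_refl /= => Hxy.
exact: ple_anti.
Qed.

End Basic.

Section Arrow.
Variables (A : finType) (N : nat) (R : profile A N -> A -> A -> bool).
Hypothesis H3 : 3 <= #|A|.
Hypothesis Hc : forall p a b, valid p -> R p a b || R p b a.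
Hypothesis Ht : forall p a b c, valid p -> R p a b -> R p b c -> R p a c.
Hypothesis HU : Unanimity R.
Hypothesis HI : IIA R.

Lemma ex3 (a c : A) : exists x, (x != a) && (x != c).
Proof.
have : ~~ ([set: A] \subset [set a; c]).
  apply/negP => /subset_leq_card; rewrite cardsT cards2 => H.
  by have := leq_trans H3 H; case: (a != c).
by case/subsetPn => x _; rewrite !inE negb_or => ?; exists x.
Qed.

Lemma mkw_wo (u : A -> nat) : is_weak_order [ffun x : A * A => u x.2 <= u x.1].
Proof.
apply/andP; split.
  by apply/forallP=> a; apply/forallP=> b; rewrite !ffunE /= leq_total.
apply/forallP=> a; apply/forallP=> b; apply/forallP=> c; rewrite !ffunE /=.
by apply/implyP=> h1; apply/implyP=> h2; apply: leq_trans h2 h1.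
Qed.
Definition mkw (u : A -> nat) : worder A := exist (fun R : wrel A => is_weak_order R) _ (mkw_wo u).
Definition upro (f : 'I_N -> A -> nat) : profile A N := [ffun j => Some (mkw (f j))].

Lemma pcmp_upro f j a b : pcmp (upro f j) a b = (f j b <= f j a).
Proof. rewrite ffunE /= /mkw /=. exact: (ffunE (fun x : A * A => f j x.2 <= f j x.1) (a, b)). Qed.
Lemma ffE (g : A -> nat) x : [ffun x : A * A => g x.2 <= g x.1] x = (g x.2 <= g x.1).
Proof. exact: (ffunE (fun x : A * A => g x.2 <= g x.1) x). Qed.
Lemma pstrict_upro f j a b : pstrict (upro f j) a b = (f j b < f j a).
Proof. by rewrite ffunE /= /wstrict /mkw /= !ffE /= -ltnNge leq_eqVlt; case: ltngtP. Qed.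
Lemma valid_upro f : valid (upro f).
Proof. by apply/forallP => j; rewrite ffunE. Qed.

Lemma cstrict_asym p a b : cstrict (R p) a b -> cstrict (R p) b a -> False.
Proof. by rewrite /cstrict => /andP [-> _] /andP [_]. Qed.

Lemma not_strict p a b : valid p -> ~~ cstrict (R p) b a -> R p a b.
Proof.
move=> vp; rewrite /cstrict negb_and negbK; case/orP => // H.
by have := Hc a b vp; rewrite (negbTE H) orbF.
Qed.

Definition vtop (r : pref A) b := [forall x, (x != b) ==> (pcmp r b x && ~~ pcmp r x b)].
Definition vbot (r : pref A) b := [forall x, (x != b) ==> (pcmp r x b && ~~ pcmp r b x)].
Definition topb p b := [forall x, (x != b) ==> cstrict (R p) b x].
Definition botb p b := [forall x, (x != b) ==> cstrict (R p) x b].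

Lemma extremal_core p b a c : valid p -> (forall j, vtop (p j) b || vbot (p j) b) ->
  a != b -> c != b -> a != c -> R p a b -> R p b c -> False.
Proof.
move=> vp Hv ab cb ac Rab Rbc.
pose f := fun (j : 'I_N) x => if x == b then (if vtop (p j) b then 3 else 0)
                     else if x == c then 2 else 1.
pose q := upro f.
have ba : b != a by rewrite eq_sym.
have bc : b != c by rewrite eq_sym.
have ca : c != a by rewrite eq_sym.
have E x : x != b -> forall j, pcmp (p j) x b = pcmp (q j) x b /\ pcmp (p j) b x = pcmp (q j) b x.
  move=> xb j; rewrite !pcmp_upro /f eqxx (negbTE xb).
  case/orP: (Hv j) => Hj.
    move/forallP: (Hj) => /(_ x); rewrite xb /= => /andP [h1 /negbTE h2].
    by rewrite Hj h1 h2; case: ifP.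
  move/forallP: (Hj) => /(_ x); rewrite xb /= => /andP [h1 /negbTE h2].
  have -> : vtop (p j) b = false.
    by apply/negP => /forallP /(_ x); rewrite xb /= h2.
  by rewrite h1 h2; case: ifP.
have [Eab Eba] := HI vp (valid_upro f) (E a ab).
have [Ecb Ebc] := HI vp (valid_upro f) (E c cb).
have Sca : cstrict (R q) c a.
  apply: HU; first exact: valid_upro.
  by move=> j; rewrite pstrict_upro /f (negbTE ab) (negbTE cb) (negbTE ac) eqxx.
have : R q a c by apply: (Ht (valid_upro f)) (_ : R q a b) _; [rewrite -Eab | rewrite -Ebc].
by move/andP: Sca => [_ /negP].
Qed.

Lemma extremal p b : valid p -> (forall j, vtop (p j) b || vbot (p j) b) -> topb p b || botb p b.
Proof.
move=> vp Hv; apply/negPn/negP; rewrite negb_or => /andP [nt nb].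
move/forallPn: nt => [a]; rewrite negb_imply => /andP [ab /(not_strict vp) Rab].
move/forallPn: nb => [c]; rewrite negb_imply => /andP [cb /(not_strict vp) Rbc].
case: (eqVneq a c) => [eac|ac]; last exact: (extremal_core vp Hv ab cb ac Rab Rbc).
subst c; have [d /andP [da db]] := ex3 a b.
case/orP: (Hc d b vp) => Hd.
  exact: (extremal_core vp Hv db ab da Hd Rbc).
by apply: (extremal_core vp Hv ab db _ Rab Hd); rewrite eq_sym.
Qed.

Definition stage b (k : nat) :=
  upro (fun j x => if j < k then nat_of_bool (x == b) else nat_of_bool (x != b)).

Lemma stage_v b k j : vtop (stage b k j) b || vbot (stage b k j) b.
Proof.
rewrite /vtop /vbot; case: (ltnP j k) => h; apply/orP; [left|right];
  apply/forallP => x; apply/implyP => xb; rewrite !pcmp_upro (negbTE xb) eqxx /=.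
  by rewrite h.
by rewrite ltnNge h.
Qed.

Lemma stage_ext b k : topb (stage b k) b || botb (stage b k) b.
Proof. exact: (extremal (valid_upro _) (stage_v b k)). Qed.

Lemma pivot b : exists k : 'I_N, botb (stage b k) b && topb (stage b k.+1) b.
Proof.
have [x /andP [xb _]] := ex3 b b.
have TN : topb (stage b N) b.
  apply/forallP => y; apply/implyP => yb; apply: HU; first exact: valid_upro.
  by move=> j; rewrite pstrict_upro ltn_ord eqxx (negbTE yb).
have B0 : botb (stage b 0) b.
  apply/forallP => y; apply/implyP => yb; apply: HU; first exact: valid_upro.
  by move=> j; rewrite pstrict_upro /= eqxx (negbTE yb).
have nT0 : ~~ topb (stage b 0) b.
  apply/negP => /forallP /(_ x); rewrite xb /= => H.
  move/forallP: B0 => /(_ x); rewrite xb /= => H'; exact: cstrict_asym H H'.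
suff : forall m, m <= N -> topb (stage b m) b ->
    exists k : 'I_N, botb (stage b k) b && topb (stage b k.+1) b.
  by apply; [exact: leqnn | exact: TN].
elim => [_|m IH mN Tm]; first by rewrite (negbTE nT0).
case Tm' : (topb (stage b m) b); first by apply: IH; [exact: ltnW | ].
have Bm : botb (stage b m) b by have := stage_ext b m; rewrite Tm'.
by exists (Ordinal mN); rewrite /= Bm Tm.
Qed.


Definition Dict (d : 'I_N) b := forall p, valid p -> forall a c, a != b -> c != b -> a != c ->
  pstrict (p d) a c -> cstrict (R p) a c.

Lemma pstrict_cmp (r : pref A) a b : pstrict r a b = pcmp r a b && ~~ pcmp r b a.
Proof. by case: r. Qed.

Lemma pcmp_total (p : profile A N) j a b : valid p -> pcmp (p j) a b || pcmp (p j) b a.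
Proof.
move/forallP => /(_ j); case: (p j) => [r|] // _; exact: wo_total.
Qed.

Lemma pivot_dict b (pv : 'I_N) : botb (stage b pv) b -> topb (stage b pv.+1) b -> Dict pv b.
Proof.
move=> Bp Tp p vp a c ab cb ac Spac.
pose f := fun (j : 'I_N) x => if x == b then (if j < pv then 3 else if j == pv then 2 else 0)
  else if x == a then (if j == pv then 3 else 1 + ~~ pcmp (p j) c a)
  else if x == c then (if j == pv then 1 else 1 + ~~ pcmp (p j) a c) else 1.
have vq := valid_upro f; set q := upro f.
have ba : b != a by rewrite eq_sym.
have bc : b != c by rewrite eq_sym.
have ca : c != a by rewrite eq_sym.
have [Eab Eba] : R (stage b pv) a b = R q a b /\ R (stage b pv) b a = R q b a.
  apply: HI => // [|j]; first exact: valid_upro.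
  rewrite !pcmp_upro /f eqxx (negbTE ab) eqxx /=.
  case: (eqVneq j pv) => [->|jpv]; first by rewrite ltnn.
  case: (ltngtP j pv) => h.
  - by case: (pcmp (p j) c a).
  - by case: (pcmp (p j) c a).
  - by case/eqP: jpv; apply: val_inj.
have [Ecb Ebc] : R (stage b pv.+1) c b = R q c b /\ R (stage b pv.+1) b c = R q b c.
  apply: HI => // [|j]; first exact: valid_upro.
  rewrite !pcmp_upro /f eqxx (negbTE cb) (negbTE ca) eqxx /=.
  case: (eqVneq j pv) => [->|jpv]; first by rewrite ltnn ltnSn.
  case: (ltngtP j pv) => h.
  - by rewrite ltnS (ltnW h); case: (pcmp (p j) a c).
  - by rewrite ltnNge h; case: (pcmp (p j) a c).
  - by case/eqP: jpv; apply: val_inj.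
have Sab : cstrict (R q) a b.
  by move/forallP: Bp => /(_ a); rewrite ab /= /cstrict Eab Eba.
have Sbc : cstrict (R q) b c.
  by move/forallP: Tp => /(_ c); rewrite cb /= /cstrict Ebc Ecb.
have Rac : R q a c.
  move/andP: Sab => [h _]; move/andP: Sbc => [h' _]; exact: Ht h h'.
have nRca : ~~ R q c a.
  apply/negP => h; move/andP: Sab => [h1 _]; move/andP: Sbc => [_ /negP]; apply.
  exact: Ht h h1.
have [Eac Eca] : R p a c = R q a c /\ R p c a = R q c a.
  apply: HI => // j.
  rewrite !pcmp_upro /f (negbTE ab) (negbTE cb) (negbTE ca) !eqxx /=.
  case: (eqVneq j pv) => [->|jpv].
    by move: Spac; rewrite pstrict_cmp => /andP [-> /negbTE ->].
  have := pcmp_total j a c vp.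
  by case: (pcmp (p j) a c); case: (pcmp (p j) c a).
by rewrite /cstrict Eac Eca Rac nRca.
Qed.

Lemma dict_unique b (pv d : 'I_N) x : botb (stage b pv) b -> topb (stage b pv.+1) b ->
  x != b -> Dict d x -> d = pv.
Proof.
move=> Bp Tp xb Dd; have [y /andP [yx yb]] := ex3 x b.
have bx : b != x by rewrite eq_sym.
have by' : b != y by rewrite eq_sym.
case: (ltngtP d pv) => h; last exact: val_inj.
- have := Dd (stage b pv) (valid_upro _) b y bx yx by'.
  rewrite /stage pstrict_upro h eqxx (negbTE yb) => /(_ isT) H.
  move/forallP: Bp => /(_ y); rewrite yb /= => H'; case: (cstrict_asym H H').
- have := Dd (stage b pv.+1) (valid_upro _) y b yx bx yb.
  rewrite /stage pstrict_upro /= (ltnNge d pv.+1) h eqxx (negbTE yb) => /(_ isT) H.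
  move/forallP: Tp => /(_ y); rewrite yb /= => H'; case: (cstrict_asym H H').
Qed.

Lemma arrow : exists d : 'I_N, forall p, valid p -> forall a c,
  pstrict (p d) a c -> cstrict (R p) a c.
Proof.
case: (pickP (@predT A)) => [b0 _|H0]; last by move: H3; rewrite (eq_card0 H0).
have [pv /andP [Bp Tp]] := pivot b0.
exists pv => p vp a c Sac.
have ac : a != c.
  apply/eqP => e; subst c; move: Sac; rewrite pstrict_cmp.
  by case: (pcmp (p pv) a a).
have [x /andP [xa xc]] := ex3 a c.
have [px /andP [Bx Tx]] := pivot x.
have Dx := pivot_dict Bx Tx.
have ax : a != x by rewrite eq_sym.
have cx : c != x by rewrite eq_sym.
case: (eqVneq x b0) => [e|xb].
  by subst x; apply: (pivot_dict Bp Tp).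
have e := dict_unique Bp Tp xb Dx.
by subst px; apply: Dx.
Qed.

End Arrow.

Theorem theorem11 (A : finType) (N : nat) (i : 'I_N)
  (w : profile A N -> pref A) :
  3 <= #|A| -> 2 <= N ->
  (exists cmp : profile A N -> A -> A -> bool,
      reads_as w cmp /\ Unanimity cmp /\ IIA cmp) ->
  NonDictatorship w ->
  exists q : profile A N,
    valid q /\
    prof_le q (prof_neg (star w i (Upsilon A i) q)) /\
    ~ ( prof_le q (prof_neg (star w i (Upsilon A i) (prof_neg q))) /\
        inconsistent (prof_neg (star w i (Upsilon A i) q))
                     (prof_neg (star w i (Upsilon A i) (prof_neg q))) ).
Proof.
move=> H3 HN [cmp [Hr [HU HI]]] ND.
case: (boolP [exists q, valid q && (w q == pc A)]) => [/existsP [q /andP [vq /eqP wq]] | Hne].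
  exists q; split => //; split.
    apply/forallP => j; rewrite /prof_neg /star /Omega !ffunE eqxx pmeet_pi wq.
    by case: ifP => _; exact: ple_pi.
  move=> [/forallP /(_ i) Hle [j]].
  rewrite /prof_neg /star /Omega !ffunE !eqxx !pmeet_pi wq /= in Hle *.
  have -> : pneg (if j == i then pc A else pc A) = Defs.pi A by case: ifP.
  rewrite pmeet_pi.
  case: (eqVneq j i) => [e|ji]; last by [].
  subst j.
  move=> Hx; rewrite Hx in Hle.
  by move/forallP: vq => /(_ i); case: (q i) Hle.
have H p : valid p -> exists r, w p = Some r.
  move=> vp; case E: (w p) => [r|]; first by exists r.
  by move/existsPn: Hne => /(_ p); rewrite vp E.
have Hc p a b : valid p -> cmp p a b || cmp p b a.
  by move=> vp; have [/forallP /(_ a) /forallP /(_ b) -> _] := Hr p vp.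
have Ht p a b c : valid p -> cmp p a b -> cmp p b c -> cmp p a c.
  move=> vp; have [r e] := H p vp; have [_] := Hr p vp; rewrite e => Hcmp.
  rewrite !Hcmp; exact: wo_trans.
have [d Hd] := arrow H3 Hc Ht HU HI.
case: ND; exists d => p vp; split.
  by move=> wp; have [r e] := H p vp; rewrite e in wp.
move=> _; have [r e] := H p vp; rewrite e.
case E: (p d) => [s|]; last by move/forallP: vp => /(_ d); rewrite E.
apply/forallP => a; apply/forallP => b; apply/implyP => Hs.
have := Hd p vp a b; rewrite E => /(_ Hs).
have [_] := Hr p vp; rewrite e => Hcmp.
by rewrite /cstrict !Hcmp.
Qed.
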